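(* Consider the $Q\times2$ coin problem below with $Q\ge12$, $C_1=40$, $C_2=64$ and budget $H>0$. If $\epsilon=\frac1{20}\sqrt{\frac{Q\delta}{H}}$, then for any algorithm $\mathrm{Alg}$, if $N_1\le\frac{Q}{4C_1\lambda^2}$, there exists a set $J\subseteq[Q]$ with $|J|\ge\frac Q6$ such that $\mathbb P_j[\hat\theta=j]\le\frac12$ for all $j\in J$.
   Context: Coin problem: constants $\delta,\lambda,\epsilon\in(0,\frac14]$ and $2Q$ coins arranged in a $Q\times2$ table (rows $1,\dots,Q$, columns $1,2$), one coin per cell. There is an unknown special row $\theta\in[Q]$. In column 1 all coins are fair except the coin in row $\theta$, whose probability of heads is $\frac12+\lambda$. In column 2 all coins have probability of heads $\delta$ except the coin in row $\theta$, with probability of heads $\delta+\epsilon$. An algorithm sequentially chooses coins to flip, each choice possibly depending on previous outcomes, performs a (possibly data-dependent) total of $\tau=N_1+N_2\le H$ flips for the fixed budget $H$, where $N_1,N_2$ are the numbers of flips in column 1 and column 2, and then outputs $\hat\theta\in[Q]$. For $j\in[Q]$, $\mathbb P_j$ is the probability measure induced by the algorithm and coins when $\theta=j$. *)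

(* Defs.v *)
From HB Require Import structures.
From mathcomp Require Import all_boot all_order all_algebra.
From mathcomp Require Import reals.
Set Implicit Arguments. Unset Strict Implicit. Unset Printing Implicit Defensive.
Import Order.TTheory GRing.Theory Num.Theory.
Local Open Scope ring_scope.

(* Coins of the Q x 2 table: a coin is (row, column) with column encoded as a
   bool: false = column 1, true = column 2. *)
Definition coin (Q : nat) := ('I_Q * bool)%type.

(* An action of the algorithm: flip a coin (inl) or stop and output an
   estimate theta_hat (inr). *)
Definition action (Q : nat) := (coin Q + 'I_Q)%type.

(* One step of the history: the coin flipped and its outcome (true = heads). *)
Definition step (Q : nat) := (coin Q * bool)%type.

(* A (possibly randomized, adaptive) algorithm: given the history so far, a
   probability distribution over the next action. *)
Definition policy (R : realType) (Q : nat) := seq (step Q) -> action Q -> R.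

Definition valid_policy (R : realType) (Q H : nat) (pi : policy R Q) : Prop :=
  [/\ forall h a, 0 <= pi h a,
      forall h, \sum_(a : action Q) pi h a = 1
    & forall h (c : coin Q), (H <= size h)%N -> pi h (inl c) = 0].

(* Probability of heads of coin c when the special row is theta. *)
Definition heads_prob (R : realType) (Q : nat) (delta lambda eps : R)
    (theta : 'I_Q) (c : coin Q) : R :=
  if c.2 then (if c.1 == theta then delta + eps else delta)
  else (if c.1 == theta then 2^-1 + lambda else 2^-1).

Definition outcome_prob (R : realType) (Q : nat) (delta lambda eps : R)
    (theta : 'I_Q) (c : coin Q) (b : bool) : R :=
  if b then heads_prob delta lambda eps theta c
  else 1 - heads_prob delta lambda eps theta c.

Fixpoint hist_prob (R : realType) (Q : nat) (delta lambda eps : R)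
    (theta : 'I_Q) (pi : policy R Q) (past s : seq (step Q)) : R :=
  match s with
  | [::] => 1
  | st :: s' => pi past (inl st.1) * outcome_prob delta lambda eps theta st.1 st.2
                * hist_prob delta lambda eps theta pi (rcons past st) s'
  end.

Definition traj_prob (R : realType) (Q : nat) (delta lambda eps : R)
    (theta : 'I_Q) (pi : policy R Q) (s : seq (step Q)) (k : 'I_Q) : R :=
  hist_prob delta lambda eps theta pi [::] s * pi s (inr k).

Definition prob_output (R : realType) (Q H : nat) (delta lambda eps : R)
    (theta : 'I_Q) (pi : policy R Q) (k : 'I_Q) : R :=
  \sum_(n < H.+1) \sum_(s : n.-tuple (step Q))
     traj_prob delta lambda eps theta pi s k.

Definition N1 (Q : nat) (s : seq (step Q)) : nat :=
  count (fun st : step Q => ~~ st.1.2) s.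

(* Main.v *)
Require Import Defs.
From HB Require Import structures.
From mathcomp Require Import all_boot all_order all_algebra.
From mathcomp Require Import reals sequences exp.
From mathcomp Require Import ring lra.
Set Implicit Arguments. Unset Strict Implicit. Unset Printing Implicit Defensive.
Import Order.TTheory GRing.Theory Num.Theory.
Local Open Scope ring_scope.

Fixpoint ghist (R : realType) (Q : nat) (pi : policy R Q) (o : coin Q -> bool -> R)
   (past s : seq (step Q)) : R :=
  match s with
  | [::] => 1
  | st :: s' => pi past (inl st.1) * o st.1 st.2 * ghist pi o (rcons past st) s'
  end.

Lemma hist_ghist (R : realType) Q (pi : policy R Q) d l e th past s :
  hist_prob d l e th pi past s = ghist pi (outcome_prob d l e th) past s.
Proof. by elim: s past => //= st s IH past; rewrite IH. Qed.

Fixpoint Ev (R : realType) (Q : nat) (pi : policy R Q) (o : coin Q -> bool -> R)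
  (F : seq (step Q) -> 'I_Q -> R) (d : nat) (h : seq (step Q)) : R :=
  \sum_(k : 'I_Q) pi h (inr k) * F h k +
  match d with
  | 0 => 0
  | d'.+1 => \sum_(c : coin Q) pi h (inl c) * \sum_(b : bool) o c b * Ev pi o F d' (rcons h (c, b))
  end.

Lemma sum_tuple0 (R : realType) (T : finType) (F : 0.-tuple T -> R) :
  \sum_(s : 0.-tuple T) F s = F [tuple].
Proof.
rewrite (eq_bigr (fun _ => F [tuple])); last by move=> s _; rewrite tuple0.
by rewrite sumr_const card_tuple expn0.
Qed.

Lemma sum_tupleS (R : realType) (T : finType) n (F : n.+1.-tuple T -> R) :
  \sum_(s : n.+1.-tuple T) F s = \sum_(x : T) \sum_(s : n.-tuple T) F [tuple of x :: s].
Proof.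
rewrite pair_bigA /=.
rewrite (reindex (fun p : T * n.-tuple T => [tuple of p.1 :: p.2])) //=.
exists (fun t : n.+1.-tuple T => (thead t, behead_tuple t)).
  by move=> [x s] _ /=; congr pair; apply: val_inj.
move=> t _; apply: val_inj => /=. by case: t => [[|x s] //= _].
Qed.

Lemma sum_pair (R : realType) (A B : finType) (F : A * B -> R) :
  \sum_(x : A * B) F x = \sum_(a : A) \sum_(b : B) F (a, b).
Proof. by rewrite pair_bigA; apply: eq_bigr => -[]. Qed.

Lemma Ev_link (R : realType) Q (pi : policy R Q) o F d h :
  Ev pi o F d h = \sum_(0 <= n < d.+1) \sum_(s : n.-tuple (step Q))
     ghist pi o h s * \sum_(k : 'I_Q) pi (h ++ s) (inr k) * F (h ++ s) k.
Proof.
elim: d h => [|d IH] h /=.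
  by rewrite big_nat1 sum_tuple0 /= cats0 mul1r addr0.
rewrite big_nat_recl // sum_tuple0 /= cats0 mul1r; congr (_ + _).
under eq_bigr => i _ do rewrite sum_tupleS.
rewrite exchange_big /= [RHS]sum_pair.
apply: eq_bigr => c _; rewrite mulr_sumr; apply: eq_bigr => b _.
rewrite IH mulr_sumr mulr_sumr; apply: eq_bigr => i _.
rewrite mulr_sumr mulr_sumr; apply: eq_bigr => s _ /=.
by rewrite -cat_rcons !mulrA.
Qed.

Lemma valid_ge0 (R : realType) Q H (pi : policy R Q) : valid_policy H pi ->
  forall h a, 0 <= pi h a.
Proof. by case. Qed.

Lemma valid_sum (R : realType) Q H (pi : policy R Q) : valid_policy H pi ->
  forall h, \sum_(k : 'I_Q) pi h (inr k) + \sum_(c : coin Q) pi h (inl c) = 1.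
Proof. by case=> _ hs _ h; rewrite -(hs h) big_sumType addrC. Qed.

Lemma valid_stop (R : realType) Q H (pi : policy R Q) : valid_policy H pi ->
  forall h, (H <= size h)%N -> \sum_(k : 'I_Q) pi h (inr k) = 1.
Proof.
move=> v h hH; rewrite -(valid_sum v h) [X in _ = _ + X]big1 ?addr0 //.
by case: v => _ _ hz c _; apply: hz.
Qed.

Lemma Ev_mart (R : realType) Q H (pi : policy R Q) o (D : seq (step Q) -> R) :
  valid_policy H pi ->
  (forall h c, \sum_(b : bool) o c b * D (rcons h (c, b)) = D h) ->
  forall d h, (size h + d = H)%N -> Ev pi o (fun h _ => D h) d h = D h.
Proof.
move=> v hD; elim=> [|d IH] h hs /=.
  by rewrite addr0 -big_distrl /= (valid_stop v) ?mul1r // -hs addn0.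
rewrite [X in _ + X](eq_bigr (fun c => pi h (inl c) * D h)); last first.
  move=> c _; congr (_ * _); rewrite -[RHS](hD h c); apply: eq_bigr => b _.
  by rewrite IH // size_rcons addSnnS.
by rewrite -!big_distrl /= -mulrDl (valid_sum v) mul1r.
Qed.

Lemma Ev_lin (R : realType) Q (pi : policy R Q) o F G a d h :
  Ev pi o (fun h k => a * F h k + G h k) d h = a * Ev pi o F d h + Ev pi o G d h.
Proof.
elim: d h => [|d IH] h /=.
  rewrite !addr0 mulr_sumr -big_split /=; apply: eq_bigr => k _; ring.
rewrite mulrDr !mulr_sumr addrACA -!big_split /=; congr (_ + _).
  by apply: eq_bigr => k _; ring.
apply: eq_bigr => c _.
rewrite mulrA (mulrC a) -mulrA -mulrDr; congr (_ * _).
rewrite mulr_sumr -big_split; apply: eq_bigr => b _ /=; rewrite IH; ring.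
Qed.

Lemma Ev_ext (R : realType) Q (pi : policy R Q) o F G d h :
  (forall h k, F h k = G h k) -> Ev pi o F d h = Ev pi o G d h.
Proof.
move=> e; elim: d h => [|d IH] h /=.
  by congr (_ + _); apply: eq_bigr => k _; rewrite e.
congr (_ + _); first by apply: eq_bigr => k _; rewrite e.
by apply: eq_bigr => c _; congr (_ * _); apply: eq_bigr => b _; rewrite IH.
Qed.

Lemma Ev_sum (R : realType) Q (pi : policy R Q) o (I : finType) (F : I -> _) d h :
  Ev pi o (fun h k => \sum_(i : I) F i h k) d h = \sum_(i : I) Ev pi o (F i) d h.
Proof.
elim: d h => [|d IH] h /=.
  rewrite addr0 (eq_bigr (fun i => \sum_k pi h (inr k) * F i h k)) => [|i _]; last by rewrite addr0.
  by rewrite [RHS]exchange_big; apply: eq_bigr => k _; rewrite mulr_sumr.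
rewrite big_split /=; congr (_ + _).
  by rewrite [RHS]exchange_big; apply: eq_bigr => k _; rewrite mulr_sumr.
rewrite [RHS]exchange_big; apply: eq_bigr => c _; rewrite -mulr_sumr; congr (_ * _).
rewrite [RHS]exchange_big; apply: eq_bigr => b _; rewrite -mulr_sumr IH //.
Qed.

Lemma ghist_ge0 (R : realType) Q (pi : policy R Q) o h s :
  (forall h a, 0 <= pi h a) -> (forall c b, 0 <= o c b) -> 0 <= ghist pi o h s.
Proof.
move=> hp ho; elim: s h => [|st s IH] h /=; first exact: ler01.
by rewrite !mulr_ge0.
Qed.

Lemma Ev_le_supp (R : realType) Q (pi : policy R Q) (o : coin Q -> bool -> R) F G d h :
  (forall h a, 0 <= pi h a) -> (forall c b, 0 < o c b) ->
  (forall s k, (size s <= d)%N -> 0 < ghist pi o h s * pi (h ++ s) (inr k) ->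
      F (h ++ s) k <= G (h ++ s) k) ->
  Ev pi o F d h <= Ev pi o G d h.
Proof.
move=> hp ho; elim: d h => [|d IH] h hFG /=.
- rewrite !addr0; apply: ler_sum => k _.
  have := hp h (inr k); rewrite le0r => /orP[/eqP->|pk]; first by rewrite !mul0r.
  rewrite ler_wpM2l ?hp //.
  by have := hFG [::] k isT; rewrite /= cats0 mul1r; apply.
apply: lerD.
  apply: ler_sum => k _.
  have := hp h (inr k); rewrite le0r => /orP[/eqP->|pk]; first by rewrite !mul0r.
  rewrite ler_wpM2l ?hp //.
  by have := hFG [::] k isT; rewrite /= cats0 mul1r; apply.
apply: ler_sum => c _.
have := hp h (inl c); rewrite le0r => /orP[/eqP->|pc]; first by rewrite !mul0r.
rewrite ler_wpM2l ?hp //; apply: ler_sum => b _; apply: ler_wpM2l; first exact: ltW.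
apply: IH => s k hs hpos; rewrite cat_rcons; apply: hFG => //=.
by rewrite -cat_rcons -mulrA mulr_gt0 // mulr_gt0.
Qed.

Lemma Ev_cst (R : realType) Q H (pi : policy R Q) (o : coin Q -> bool -> R) a d h :
  valid_policy H pi -> (forall c, \sum_(b : bool) o c b = 1) ->
  (size h + d = H)%N -> Ev pi o (fun _ _ => a) d h = a.
Proof.
move=> v ho hs; apply: (Ev_mart (D := fun _ => a) v) => // h' c.
by rewrite -big_distrl /= ho mul1r.
Qed.

Definition Lr (R : realType) Q (o0 o1 : coin Q -> bool -> R) (h : seq (step Q)) : R :=
  \sum_(st <- h) ln (o0 st.1 st.2 / o1 st.1 st.2).
Definition rr (R : realType) Q (o0 o1 : coin Q -> bool -> R) (h : seq (step Q)) : R :=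
  expR (- Lr o0 o1 h).

Lemma rr_rcons (R : realType) Q (o0 o1 : coin Q -> bool -> R) h c b :
  0 < o0 c b -> 0 < o1 c b -> rr o0 o1 (rcons h (c, b)) = rr o0 o1 h * (o1 c b / o0 c b).
Proof.
move=> h0 h1; rewrite /rr /Lr -cats1 big_cat big_seq1 /= opprD expRD; congr (_ * _).
by rewrite -lnV ?posrE ?divr_gt0 // invf_div lnK // posrE divr_gt0.
Qed.

Lemma change_meas (R : realType) Q (pi : policy R Q) (o0 o1 : coin Q -> bool -> R) F d h :
  (forall c b, 0 < o0 c b) -> (forall c b, 0 < o1 c b) ->
  rr o0 o1 h * Ev pi o1 F d h = Ev pi o0 (fun h k => rr o0 o1 h * F h k) d h.
Proof.
move=> h0 h1; elim: d h => [|d IH] h /=.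
  by rewrite !addr0 mulr_sumr; apply: eq_bigr => k _; rewrite mulrCA.
rewrite mulrDr mulr_sumr; congr (_ + _).
  by apply: eq_bigr => k _; rewrite mulrCA.
rewrite mulr_sumr; apply: eq_bigr => c _; rewrite mulrCA; congr (_ * _).
rewrite mulr_sumr; apply: eq_bigr => b _; rewrite -IH rr_rcons //.
have := lt0r_neq0 (h0 c b) => nz. by field.
Qed.

Lemma ln_le_sub1 (R : realType) (x : R) : 0 < x -> ln x <= x - 1.
Proof. by move=> x0; have := expR_ge1Dx (ln x); rewrite lnK ?posrE //; lra. Qed.

Lemma gibbs (R : realType) Q H (pi : policy R Q) (o0 o1 : coin Q -> bool -> R) w :
  valid_policy H pi ->
  (forall c b, 0 < o0 c b) -> (forall c b, 0 < o1 c b) ->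
  (forall c, \sum_(b : bool) o0 c b = 1) -> (forall c, \sum_(b : bool) o1 c b = 1) ->
  (forall h k, 0 < w h k) -> 0 < Ev pi o1 w H [::] ->
  Ev pi o0 (fun h k => ln (w h k)) H [::] - ln (Ev pi o1 w H [::])
    <= Ev pi o0 (fun h _ => Lr o0 o1 h) H [::].
Proof.
move=> v p0 p1 s0 s1 wp; set Z := Ev pi o1 w H [::] => Zp.
have key : Ev pi o0 (fun h k => (-1) * Lr o0 o1 h + (1 * ln (w h k) + (- ln Z))) H [::]
   <= Ev pi o0 (fun h k => Z^-1 * (rr o0 o1 h * w h k) + (-1)) H [::].
  apply: Ev_le_supp; first exact: valid_ge0 v.
    by [].
  move=> s k _ _.
  have rp : 0 < rr o0 o1 ([::] ++ s) by apply: expR_gt0.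
  have := ln_le_sub1 (divr_gt0 (mulr_gt0 rp (wp ([::] ++ s) k)) Zp).
  rewrite ln_div ?posrE ?mulr_gt0 // lnM ?posrE // /rr expRK; lra.
rewrite Ev_lin Ev_lin (Ev_cst _ v s0) // Ev_lin (Ev_cst _ v s0) // in key.
have r0 : rr o0 o1 [::] = 1 by rewrite /rr /Lr big_nil oppr0 expR0.
rewrite -change_meas // r0 !mul1r -/Z mulVf ?lt0r_neq0 // in key.
lra.
Qed.

Lemma mart_sum (R : realType) Q H (pi : policy R Q) (o : coin Q -> bool -> R) (f : step Q -> R) :
  valid_policy H pi -> (forall c, \sum_(b : bool) o c b = 1) ->
  Ev pi o (fun h _ => \sum_(st <- h) f st) H [::] =
  Ev pi o (fun h _ => \sum_(st <- h) (\sum_(b : bool) o st.1 b * f (st.1, b))) H [::].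
Proof.
move=> v so.
set g := fun c : coin Q => \sum_(b : bool) o c b * f (c, b).
set D := fun h : seq (step Q) => \sum_(st <- h) (f st - g st.1).
have -> : Ev pi o (fun h _ => \sum_(st <- h) f st) H [::] =
   Ev pi o (fun h _ => 1 * D h + \sum_(st <- h) g st.1) H [::].
  by apply: Ev_ext => h k; rewrite mul1r /D sumrB subrK.
rewrite Ev_lin (Ev_mart (D := D) v) //; first by rewrite /D big_nil mulr0 add0r.
move=> h c; rewrite /D.
under eq_bigr => b _ do rewrite -cats1 big_cat big_seq1 /=.
under eq_bigr => b _ do rewrite mulrDr mulrBr.
have := so c; rewrite /g !big_bool /= => hs.
have -> : o c false = 1 - o c true by lra.
ring.
Qed.

Lemma sum_Lr (R : realType) Q (o0 : coin Q -> bool -> R) (oj : 'I_Q -> coin Q -> bool -> R) h :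
  (forall c b, 0 < o0 c b) ->
  (forall j c b, c.1 != j -> oj j c b = o0 c b) ->
  \sum_(j : 'I_Q) Lr o0 (oj j) h = \sum_(st <- h) ln (o0 st.1 st.2 / oj st.1.1 st.1 st.2).
Proof.
move=> p0 off; rewrite /Lr exchange_big /=; apply: eq_bigr => st _.
rewrite (bigD1 st.1.1) //= big1 ?addr0 // => j hj.
by rewrite off 1?eq_sym // divff ?ln1 ?lt0r_neq0.
Qed.

Lemma ghist_pos (R : realType) Q (pi : policy R Q) (o o' : coin Q -> bool -> R) h s :
  (forall h a, 0 <= pi h a) -> (forall c b, 0 < o c b) -> (forall c b, 0 < o' c b) ->
  0 < ghist pi o h s -> 0 < ghist pi o' h s.
Proof.
move=> hp p1 p2; elim: s h => [|st s IH] h //=.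
have := hp h (inl st.1); rewrite le0r => /orP[/eqP->|pc]; first by rewrite !mul0r ltxx.
have := ghist_ge0 (rcons h st) s hp (fun c b => ltW (p1 c b)).
rewrite le0r => /orP[/eqP->|pg]; first by rewrite mulr0 ltxx.
by move=> _; rewrite !mulr_gt0 // IH.
Qed.
Lemma col1_bound (R : realType) (l : R) : 0 < l <= 4^-1 ->
  2^-1 * (2^-1 / (2^-1 + l) - 1) + (1 - 2^-1) * ((1 - 2^-1) / (1 - (2^-1 + l)) - 1)
   <= 16 / 3 * l ^+ 2.
Proof.
move=> /andP[l0 l1].
have a0 : 0 < 2^-1 + l by lra.
have b0 : 0 < 1 - (2^-1 + l) by lra.
have -> : 2^-1 * (2^-1 / (2^-1 + l) - 1) + (1 - 2^-1) * ((1 - 2^-1) / (1 - (2^-1 + l)) - 1)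
   = l ^+ 2 / ((2^-1 + l) * (1 - (2^-1 + l))).
  by field; apply/andP; split; apply/lt0r_neq0; lra.
have hp : 3/16 <= (2^-1 + l) * (1 - (2^-1 + l)) by nra.
rewrite ler_pdivrMr ?mulr_gt0 //.
have l2 : 0 <= l ^+ 2 by rewrite sqr_ge0.
move: hp l2; set P := ((2^-1 + l) * _); set L := l ^+ 2 => hp l2; nra.
Qed.

Lemma col2_bound (R : realType) (d e : R) : 0 < d <= 4^-1 -> 0 < e <= 4^-1 ->
  d * (d / (d + e) - 1) + (1 - d) * ((1 - d) / (1 - (d + e)) - 1) <= 2 * e ^+ 2 / d.
Proof.
move=> /andP[d0 d1] /andP[e0 e1].
have a0 : 0 < d + e by lra.
have b0 : 0 < 1 - (d + e) by lra.
have -> : d * (d / (d + e) - 1) + (1 - d) * ((1 - d) / (1 - (d + e)) - 1)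
   = e ^+ 2 / ((d + e) * (1 - (d + e))).
  by field; apply/andP; split; apply/lt0r_neq0; lra.
have hp : d / 2 <= (d + e) * (1 - (d + e)) by nra.
rewrite ler_pdivrMr ?mulr_gt0 // mulrAC ler_pdivlMr //.
have l2 : 0 <= e ^+ 2 by rewrite sqr_ge0.
move: hp l2; set P := ((d + e) * _); set L := e ^+ 2 => hp l2; nra.
Qed.

Lemma num27 (R : realType) : 1 / 10 < 3 / 4 * ln (3 : R) - ln 2.
Proof.
have h3 : ln ((3 : R) ^+ 3) = 3 * ln 3 by rewrite lnXn // mulr_natl.
have h2 : ln ((2 : R) ^+ 4) = 4 * ln 2 by rewrite lnXn // mulr_natl.
have : ln ((2 : R) ^+ 4 / 3 ^+ 3) <= 2 ^+ 4 / 3 ^+ 3 - 1.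
  by apply: ln_le_sub1 => //; rewrite divr_gt0 // exprn_gt0.
have E : (2 : R) ^+ 4 / 3 ^+ 3 = 16 / 27 by rewrite !exprS expr0 !mulr1; field.
rewrite ln_div ?posrE ?exprn_gt0 // h3 h2 E.
lra.
Qed.

Lemma sum_g_bound (R : realType) Q (g : coin Q -> R) (k1 k2 : R) :
  0 <= k1 -> 0 <= k2 -> (forall c, g c <= if c.2 then k2 else k1) ->
  forall s : seq (step Q), \sum_(st <- s) g st.1 <= k1 * (N1 s)%:R + k2 * (size s)%:R.
Proof.
move=> k10 k20 hg; elim=> [|st s IH]; first by rewrite big_nil /N1 /= !mulr0 addr0.
rewrite big_cons /N1 /= -/(N1 s) natrD -addn1 natrD.
have := hg st.1; case: (st.1.2) => /= hst; lra.
Qed.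

Lemma prod_pos (R : realType) (a b : R) : 0 <= a -> 0 <= b -> 0 < a * b -> 0 < a /\ 0 < b.
Proof.
rewrite le0r => /orP[/eqP->|ha]; first by rewrite mul0r ltxx.
rewrite le0r => /orP[/eqP->|hb]; first by rewrite mulr0 ltxx.
by [].
Qed.

Unset Implicit Arguments.

Theorem corollary3 (R : realType) (Q H : nat) (delta lambda eps : R)
    (pi : policy R Q) :
  (12 <= Q)%N -> (0 < H)%N ->
  0 < delta <= 4^-1 -> 0 < lambda <= 4^-1 -> 0 < eps <= 4^-1 ->
  eps = 20^-1 * Num.sqrt (Q%:R * delta / H%:R) ->
  valid_policy H pi ->
  (* N_1 <= Q / (4 C_1 lambda^2) with C_1 = 40, almost surely under every P_j *)
  (forall (j : 'I_Q) (s : seq (step Q)) (k : 'I_Q),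
      0 < traj_prob delta lambda eps j pi s k ->
      (N1 s)%:R <= Q%:R / (4 * 40 * lambda ^+ 2)) ->
  exists J : {set 'I_Q},
    (Q%:R / 6 : R) <= #|J|%:R /\
    forall j, j \in J -> prob_output H delta lambda eps j pi j <= 2^-1.
Proof.
move=> hQ hH /andP[d0 d1] /andP[l0 l1] /andP[e0 e1] heps v hN1.
pose h0 := fun c : coin Q => (if c.2 then delta else 2^-1 : R).
pose o0 := fun (c : coin Q) (b : bool) => if b then h0 c else 1 - h0 c.
pose oj := fun j : 'I_Q => outcome_prob delta lambda eps j.
have hp := valid_ge0 v.
have p0 : forall c b, 0 < o0 c b.
  by move=> [i []] []; rewrite /o0 /h0 /=; lra.
have pj : forall j c b, 0 < oj j c b.
  by move=> j [i []] []; rewrite /oj /outcome_prob /heads_prob /=; case: (i == j); lra.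
have s0 : forall c, \sum_(b : bool) o0 c b = 1.
  by move=> c; rewrite big_bool /o0 /=; ring.
have sj : forall j c, \sum_(b : bool) oj j c b = 1.
  by move=> j c; rewrite big_bool /oj /outcome_prob /=; ring.
have off : forall j c b, c.1 != j -> oj j c b = o0 c b.
  by move=> j [i col] b /= /negbTE hij; rewrite /oj /outcome_prob /heads_prob /= hij.
have Ecst : forall a (o : coin Q -> bool -> R), (forall c, \sum_(b : bool) o c b = 1) ->
    Ev pi o (fun _ _ => a) H [::] = a.
  by move=> a o so; apply: (Ev_cst _ v so).
pose p j := Ev pi o0 (fun _ k => (k == j)%:R) H [::].
pose K j := Ev pi o0 (fun h _ => Lr o0 (oj j) h) H [::].
pose P j := Ev pi (oj j) (fun _ k => (k == j)%:R) H [::].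
have hPo : forall j, prob_output H delta lambda eps j pi j = P j.
  move=> j; rewrite /P Ev_link big_mkord /prob_output; apply: eq_bigr => n _.
  apply: eq_bigr => s _; rewrite /traj_prob hist_ghist /=.
  by rewrite (bigD1 j) //= eqxx mulr1 big1 ?addr0 // => k /negbTE ->; rewrite mulr0.
have p_ge0 : forall j, 0 <= p j.
  move=> j; rewrite -(Ecst 0 o0 s0); apply: Ev_le_supp => // s k _ _; exact: ler0n.
have sum_p : \sum_j p j = 1.
  rewrite /p -Ev_sum (@Ev_ext _ _ _ _ _ (fun _ _ => 1)) ?Ecst //; move=> h k.
  by rewrite (bigD1 k) //= eqxx big1 ?addr0 // => j hj; rewrite eq_sym (negbTE hj).
have K_ge0 : forall j, 0 <= K j.
  move=> j.
  have := @gibbs R Q H pi o0 (oj j) (fun _ _ => 1) v p0 (pj j) s0 (sj j)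
     (fun _ _ => ltr01) (ltac:(by rewrite Ecst)).
  rewrite (@Ev_ext _ _ _ _ _ (fun _ _ => 0)); last by move=> h k; exact: ln1.
  by rewrite !Ecst // ln1 subrr.
have q0 : (0 < Q)%N by apply: leq_trans hQ.
pose j0 : 'I_Q := Ordinal q0.
have Hpos : (0 : R) < H%:R by rewrite ltr0n.
have e2 : eps ^+ 2 = Q%:R * delta / H%:R / 400.
  rewrite heps exprMn sqr_sqrtr ?divr_ge0 ?mulr_ge0 ?ler0n ?ltW //.
  by rewrite expr2; field; rewrite lt0r_neq0.
have sumK : \sum_j K j <= Q%:R * 23 / 600.
  rewrite /K -Ev_sum.
  rewrite (@Ev_ext _ _ _ _ _ (fun h _ => \sum_(st <- h) ln (o0 st.1 st.2 / oj st.1.1 st.1 st.2)));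
    last by move=> h k; apply: sum_Lr.
  rewrite (mart_sum _ v s0) /=.
  set k1 := 16 / 3 * lambda ^+ 2; set k2 := 2 * eps ^+ 2 / delta.
  have k10 : 0 <= k1 by rewrite /k1; have := sqr_ge0 lambda; lra.
  have k20 : 0 <= k2.
    by rewrite /k2; apply: divr_ge0; [apply: mulr_ge0 => //; exact: sqr_ge0 | exact: ltW].
  have gb : forall c : coin Q, \sum_(b : bool) o0 c b * ln (o0 c b / oj c.1 c b)
                 <= if c.2 then k2 else k1.
    move=> [i col].
    apply: (@le_trans _ _ (\sum_(b : bool) o0 (i, col) b * (o0 (i, col) b / oj i (i, col) b - 1))).
      apply: ler_sum => b _; apply: ler_wpM2l; first exact: ltW.
      by apply: ln_le_sub1; apply: divr_gt0.
    rewrite big_bool /o0 /oj /outcome_prob /heads_prob /h0 /= eqxx; case: col => /=.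
      by apply: col2_bound; apply/andP; split.
    by apply: col1_bound; apply/andP; split.
  apply: (@le_trans _ _ (Ev pi o0 (fun _ _ => k1 * (Q%:R / (4 * 40 * lambda ^+ 2)) + k2 * H%:R) H [::])).
    apply: Ev_le_supp => // s k hs hpos.
    apply: le_trans (sum_g_bound k10 k20 gb s) _.
    apply: lerD; apply: ler_wpM2l => //; last by rewrite ler_nat.
    apply: (hN1 j0 s k).
    have [hg hpk] := prod_pos (ghist_ge0 _ _ hp (fun c b => ltW (p0 c b))) (hp _ _) hpos.
    rewrite /traj_prob hist_ghist mulr_gt0 //.
    exact: ghist_pos hp p0 (pj j0) hg.
  rewrite Ecst // /k1 /k2 e2.
  have -> : 16 / 3 * lambda ^+ 2 * (Q%:R / (4 * 40 * lambda ^+ 2)) = Q%:R / 30.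
    by field; rewrite lt0r_neq0.
  have -> : 2 * (Q%:R * delta / H%:R / 400) / delta * H%:R = Q%:R / 200.
    by field; apply/andP; split; apply: lt0r_neq0.
  lra.
have F5 : forall j, p j <= 4^-1 -> K j < 10^-1 -> P j <= 2^-1.
  move=> j pj4 kj; rewrite leNgt; apply/negP => hPj.
  have P1 : P j <= 1.
    rewrite -(Ecst 1 (oj j) (sj j)); apply: Ev_le_supp => // s k _ _.
    by case: (_ == _); rewrite ?lexx ?ler01.
  pose w := fun (_ : seq (step Q)) (k : 'I_Q) => (if k == j then 3^-1 else 1 : R).
  have wp : forall h k, 0 < w h k.
    by move=> h k; rewrite /w; case: (_ == _); rewrite ?invr_gt0 ?ltr01 ?ltr0n.
  have Zeq : Ev pi (oj j) w H [::] = (- (2 / 3)) * P j + 1.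
    rewrite (@Ev_ext _ _ _ _ _ (fun h k => (- (2 / 3)) * (k == j)%:R + 1)).
      by rewrite Ev_lin Ecst.
    by move=> h k; rewrite /w; case: (_ == _); rewrite /= ?mulr1 ?mulr0; lra.
  have Zp : 0 < Ev pi (oj j) w H [::] by rewrite Zeq; lra.
  have G := gibbs v p0 (pj j) s0 (sj j) wp Zp.
  rewrite (@Ev_ext _ _ _ _ _ (fun h k => ln 3^-1 * (k == j)%:R + 0)) in G; last first.
    by move=> h k; rewrite /w; case: (_ == _); rewrite /= ?mulr1 ?mulr0 ?addr0 ?ln1.
  rewrite Ev_lin Ecst // addr0 -/(p j) -/(K j) Zeq in G.
  have l3 : 0 <= ln (3 : R) by apply: ln_ge0; rewrite ler1n.
  have lp : ln (3 : R) * p j <= ln 3 * 4^-1 by rewrite ler_wpM2l.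
  have lz : ln (- (2 / 3) * P j + 1) < ln (2 / 3).
    rewrite ltr_ln ?posrE; [lra | lra | lra].
  rewrite lnV ?posrE // in G.
  rewrite ln_div ?posrE // in lz.
  have := num27 R; lra.
pose J := [set j | (p j <= 4^-1) && (K j < 10^-1)].
exists J; split; last first.
  by move=> j; rewrite inE => /andP[pj4 kj]; rewrite hPo; apply: F5.
have hc := cardsC J; rewrite card_ord in hc.
have bad : (#|~: J|)%:R <= 4 + Q%:R * 23 / 60 :> R.
  rewrite -sumr_const.
  apply: (@le_trans _ _ (\sum_(j in ~: J) (4 * p j + 10 * K j))).
    apply: ler_sum => j; rewrite !inE negb_and -!ltNge -leNgt => /orP[h|h];
      have := p_ge0 j; have := K_ge0 j; lra.
  apply: (@le_trans _ _ (\sum_j (4 * p j + 10 * K j))).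
    rewrite [X in _ <= X](bigID (fun j => j \in ~: J)) /= lerDl; apply: sumr_ge0 => j _.
    by have := p_ge0 j; have := K_ge0 j; lra.
  rewrite big_split /= -!mulr_sumr sum_p; lra.
have : (#|J| + #|~: J|)%:R = Q%:R :> R by rewrite hc.
rewrite natrD => hc'.
have : (12 : R) <= Q%:R by rewrite ler_nat.
lra.
Qed.
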